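(* Let $q$ be a power of an odd prime with $q\equiv1\pmod4$, let $k$ be a divisor of $q-1$ such that $e=(q-1)/k$ is even. If $(q,k)$ gives a $3$-design, then $k\equiv 1,2,5,10,13$ or $17\pmod{24}$.
   Context: The group $\mathrm{PSL}(2,q)$ acts on $\mathrm{PG}(1,q)=\mathbb{F}_q\cup\{\infty\}$ by linear fractional transformations $z\mapsto (az+b)/(cz+d)$ with $ad-bc$ a nonzero square in $\mathbb{F}_q$. A $k$-subset $B$ of $\mathrm{PG}(1,q)$ is a starter of a $3$-design if its $\mathrm{PSL}(2,q)$-orbit is the block set of a $3$-$(q+1,k,\lambda)$ design for some positive integer $\lambda$. ''$(q,k)$ gives a $3$-design'' means the unique subgroup of order $k$ of $\mathbb{F}_q^\times$ is such a starter. *)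

(* Defs.v *)
From HB Require Import structures.
From mathcomp Require Import all_boot all_order all_algebra all_field.
Set Implicit Arguments. Unset Strict Implicit. Unset Printing Implicit Defensive.
Import GRing.Theory.
Local Open Scope ring_scope.

(* PG(1,q) = F ∪ {∞}, with None standing for ∞. *)
Definition PG1 (F : finFieldType) : finType := option F.

Definition lft (F : finFieldType) (a b c d : F) (z : option F) : option F :=
  match z with
  | None => if c == 0 then None else Some (a / c)
  | Some x => if c * x + d == 0 then None else Some ((a * x + b) / (c * x + d))
  end.

Definition psl_det (F : finFieldType) (a b c d : F) : bool :=
  [exists y : F, (y != 0) && (a * d - b * c == y ^+ 2)].

Definition psl_orbit (F : finFieldType) (B : {set option F}) : {set {set option F}} :=
  [set [set lft m.1.1.1 m.1.1.2 m.1.2 m.2 z | z in B]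
  | m : F * F * F * F & psl_det m.1.1.1 m.1.1.2 m.1.2 m.2].

Definition is_3design (P : finType) (blocks : {set {set P}}) : Prop :=
  exists lam : nat, (0 < lam)%N /\
    forall T : {set P}, #|T| = 3%N -> #|[set C in blocks | T \subset C]| = lam.

(* the unique subgroup of order k of F^x, viewed inside PG(1,q) *)
Definition mu_sub (F : finFieldType) (k : nat) : {set option F} :=
  [set Some x | x in [set x : F | x ^+ k == 1]].

Definition gives_3design (F : finFieldType) (k : nat) : Prop :=
  is_3design (psl_orbit (mu_sub F k)).

(* Main.v *)
Require Import Defs.
From HB Require Import structures.
From mathcomp Require Import all_boot all_order all_algebra all_field.
From mathcomp Require Import cyclic zify ring.
Set Implicit Arguments. Unset Strict Implicit. Unset Printing Implicit Defensive.
Import GRing.Theory.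

Lemma orbit_div (T : finType) (n : nat) (O : T -> {set T}) :
  forall m (S : {set T}), #|S| <= m ->
  (forall x, x \in S -> [/\ x \in O x, O x \subset S, #|O x| = n &
                          forall y, y \in O x -> O y = O x]) ->
  n %| #|S|.
Proof.
elim=> [|m IH] S.
  by rewrite leqn0 => /eqP ->.
move=> Hm HS.
have [->|[x Hx]] := set_0Vmem S; first by rewrite cards0 dvdn0.
have [xO OS cO Oy] := HS x Hx.
have eS : #|S| = n + #|S :\: O x|.
  by rewrite cardsD (setIidPr OS) -cO subnKC // subset_leq_card.
rewrite eS dvdn_addr ?dvdnn //.
apply: IH.
  have : 0 < n by rewrite -cO; apply/card_gt0P; exists x.
  move: Hm; rewrite eS; lia.
move=> y; rewrite inE => /andP [yO yS].
have [yy Oys cOy Oyy] := HS y yS.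
split=> //.
  apply/subsetP=> z zO; rewrite inE (subsetP Oys) // andbT.
  apply/negP=> zOx.
  have h1 := Oy z zOx. have h2 := Oyy z zO.
  by move: yO; rewrite -h1 h2 yy.
Qed.

Lemma inv_div (T : finType) (f : T -> T) (S : {set T}) :
  (forall x, x \in S -> [/\ f x \in S, f (f x) = x & f x != x]) ->
  2 %| #|S|.
Proof.
move=> H.
apply: (@orbit_div T 2 (fun x => [set x; f x]) #|S|) => // x xS /=.
have [fS ffx fx] := H x xS.
split.
- by rewrite !inE eqxx.
- by apply/subsetP=> y; rewrite !inE => /orP [] /eqP ->.
- by rewrite cards2 eq_sym fx.
- move=> y; rewrite !inE => /orP [] /eqP ->; first by [].
  by rewrite ffx setUC.
Qed.

Lemma ord3_div (T : finType) (f : T -> T) (S : {set T}) :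
  (forall x, x \in S -> [/\ f x \in S, f (f (f x)) = x & f x != x]) ->
  3 %| #|S|.
Proof.
move=> H.
apply: (@orbit_div T 3 (fun x => [set x; f x; f (f x)]) #|S|) => // x xS /=.
have [fS fffx fx] := H x xS.
have [ffS _ ffx] := H _ fS.
have n1 : f (f x) != x.
  apply/eqP=> e; have h : f (f (f x)) = f x by rewrite e.
  by move: fx; rewrite -h fffx eqxx.
split.
- by rewrite !inE eqxx.
- apply/subsetP=> y; rewrite !inE => /orP [/orP [] | ] /eqP -> //.
- have a1 : (x == f x) = false by rewrite eq_sym (negbTE fx).
  have a2 : (x == f (f x)) = false by rewrite eq_sym (negbTE n1).
  by rewrite -setUA cardsU1 cards2 !inE a1 a2 eq_sym ffx.
- have [_ fffx' _] := H _ fS.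
  move=> y; rewrite !inE => /orP [/orP [] | ] /eqP -> //.
  + apply/setP=> w; rewrite !inE fffx.
    by case: (w == x); case: (w == f x); case: (w == f (f x)).
  + apply/setP=> w; rewrite !inE fffx.
    by case: (w == x); case: (w == f x); case: (w == f (f x)).
Qed.

Lemma klein_div (T : finType) (f g : T -> T) (S : {set T}) :
  (forall x, x \in S -> [/\ f x \in S, g x \in S, f (f x) = x, g (g x) = x &
     [/\ f (g x) = g (f x), f x != x, g x != x & f (g x) != x]]) ->
  4 %| #|S|.
Proof.
move=> H.
apply: (@orbit_div T 4 (fun x => [set x; f x; g x; f (g x)]) #|S|) => // x xS /=.
have [fS gS ffx ggx [fg fx gx fgx]] := H x xS.
have [fgS _ _ _ _] := H _ gS.
have [_ _ ffg ggf _] := H _ fS.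
have [_ _ ffgx _ _] := H _ gS.
split.
- by rewrite !inE eqxx.
- apply/subsetP=> y; rewrite !inE => /orP [/orP [/orP [] | ] | ] /eqP -> //.
- have d1 : f x != g x by apply: contra fgx => /eqP e; rewrite -e ffx.
  have d2 : f x != f (g x).
    apply: contra gx => /eqP e; have := congr1 f e; rewrite ffx ffgx => <-; by [].
  have d3 : g x != f (g x).
    apply: contra fx => /eqP e; have := congr1 g e.
    by rewrite ggx fg ggf => h; rewrite -h.
  rewrite -!setUA !cardsU1 cards1 !inE.
  rewrite !(eq_sym x) (negbTE fx) (negbTE gx) (negbTE fgx).
  by rewrite (negbTE d1) (negbTE d2) (negbTE d3).
- have e1 : g (f x) = f (g x) by rewrite fg.
  have h3 : g (f (g x)) = f x by rewrite -e1 ggf.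
  move=> y; rewrite !inE => /orP [/orP [/orP [] | ] | ] /eqP -> //;
   apply/setP=> w; rewrite !inE ?ffx ?e1 ?ffgx ?ggx ?h3 ?ffx;
   by case: (w == x); case: (w == f x); case: (w == g x); case: (w == f (g x)).
Qed.

Lemma arith_odd k P : odd k -> (2 * P = (k - 1) * (k - 2))%N -> (2 %| P)%N -> k %% 4 = 1.
Proof.
move=> ko e /dvdnP [a ea].
have h : (4 %| (k - 1) * (k - 2))%N by rewrite -e ea; apply/dvdnP; exists a; lia.
case: (ltnP k 3) => k3.
  have : k = 1 by move: ko k3; case: (k) => [|[|[|]]].
  by move=> ->.
have co : coprime 4 (k - 2).
  rewrite (_ : 4 = 2 ^ 2)%N // coprime_pexpl // coprime2n.
  by rewrite oddB ?ko // ltnW.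
rewrite Gauss_dvdl // in h.
move: h => /dvdnP [b hb]; lia.
Qed.

Lemma arith_even k P (m : nat) : 0 < k -> ~~ odd k -> (2 * P = (k - 1) * (k - 2))%N ->
  (2 ^ m %| P)%N -> (2 ^ m.+1 %| k - 2)%N.
Proof.
move=> k0 ke e /dvdnP [a ea].
have h : (2 ^ m.+1 %| (k - 1) * (k - 2))%N.
  by rewrite -e ea expnS; apply/dvdnP; exists a; lia.
have co : coprime (2 ^ m.+1) (k - 1).
  by rewrite coprime_pexpl // coprime2n oddB // (negbTE ke).
by rewrite (Gauss_dvdr _ co) in h.
Qed.

Lemma arith3 k P : 0 < k -> (2 * P = (k - 1) * (k - 2))%N -> (3 %| P) || (3 %| P + 1) -> ~~ (3 %| k).
Proof.
move=> k0 e h; apply/negP => /dvdnP [j ej].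
case: j ej => [|j] ej; first by move: k0; rewrite ej.
have e2 : ((k - 1) * (k - 2) + 2 = k * (k - 3) + 4)%N by rewrite ej; nia.
case/orP: h => /dvdnP [b hb].
- have : (3 %| (k - 1) * (k - 2))%N by rewrite -e hb; apply/dvdnP; exists (2 * b); lia.
  rewrite Euclid_dvdM // => /orP []; rewrite ej => /dvdnP [c hc]; lia.
- have : (3 %| k * (k - 3) + 4)%N.
    rewrite -e2 -e; apply/dvdnP; exists (2 * b); lia.
  rewrite ej -mulnA; move/dvdnP => [c hc]; lia.
Qed.

Lemma arith_final k : (k %% 4 = 1 \/ k %% 8 = 2) -> ~~ (3 %| k) ->
  k %% 24 \in [:: 1; 2; 5; 10; 13; 17].
Proof.
move=> h h3.
have : k %% 24 = 1 \/ k %% 24 = 2 \/ k %% 24 = 5 \/ k %% 24 = 10 \/ k %% 24 = 13 \/ k %% 24 = 17.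
  lia.
by case=> [->|[->|[->|[->|[->|->]]]]].
Qed.

Local Open Scope ring_scope.

Section FF.
Variable F : finFieldType.

Definition issq (a : F) := [exists y : F, a == y ^+ 2].

Lemma issqP a : reflect (exists y, a = y ^+ 2) (issq a).
Proof.
apply: (iffP existsP) => [[y /eqP ->]|[y ->]]; by exists y.
Qed.

Lemma issq_mulsq a s : s != 0 -> issq (a * s ^+ 2) = issq a.
Proof.
move=> s0; apply/issqP/issqP => [[y e]|[y ->]]; last by exists (y * s); rewrite exprMn.
exists (y / s); rewrite expr_div_n -e mulfK //; by rewrite expf_neq0.
Qed.

Lemma expf_n1 (x : F) : x != 0 -> x ^+ (#|F|.-1) = 1.
Proof.
move=> x0; apply: (mulIf x0); rewrite mul1r -exprSr.
by rewrite (ltn_predK (finNzRing_gt1 F)) expf_card.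
Qed.

Lemma prim_exists : exists z : F, (#|F|.-1).-primitive_root z.
Proof.
have n0 : (0 < #|F|.-1)%N by move: (finNzRing_gt1 F); case: #|F| => [|[|m]].
have h1 : all (#|F|.-1).-unity_root (enum (predC1 (0 : F))).
  apply/allP=> x; rewrite mem_enum inE => x0.
  by rewrite unity_rootE expf_n1.
have h2 : uniq (enum (predC1 (0 : F))) by exact: enum_uniq.
have h3 : (#|F|.-1 <= size (enum (predC1 (0 : F)%R)))%N by rewrite -cardE cardC1.
have /hasP [z _ pz] := has_prim_root n0 h1 h2 h3.
by exists z.
Qed.

Variable z : F.
Hypothesis pz : (#|F|.-1).-primitive_root z.
Let n := #|F|.-1.

Lemma n_gt0 : (0 < n)%N.
Proof. exact: prim_order_gt0 pz. Qed.

Lemma z_neq0 : z != 0.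
Proof. by rewrite (prim_root_eq0 pz) -lt0n n_gt0. Qed.

Lemma pow_z (x : F) : x != 0 -> exists i, x = z ^+ i.
Proof.
move=> x0; have [i ->] := prim_rootP pz (expf_n1 x0); by exists i.
Qed.

Hypothesis n_even : ~~ odd n.

Lemma sq_pow i : issq (z ^+ i) = ~~ odd i.
Proof.
apply/issqP/idP => [[y e]|ev]; last first.
  exists (z ^+ i./2); rewrite -exprM muln2.
  by rewrite -{1}(odd_double_half i) (negbTE ev) add0n.
have y0 : y != 0.
  apply/eqP=> y0; move: e; rewrite y0 expr0n /= => /eqP.
  by rewrite expf_eq0 (negbTE z_neq0) andbF.
have [j ej] := pow_z y0.
move: e; rewrite ej -exprM => /eqP; rewrite (eq_prim_root_expr pz) => /eqP e.
rewrite -(odd_mod i (negbTE n_even)) e odd_mod ?(negbTE n_even) //.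
by rewrite oddM andbF.
Qed.

Lemma nsq_mul a b : a != 0 -> b != 0 -> ~~ issq a -> ~~ issq b -> issq (a * b).
Proof.
move=> a0 b0; have [i ->] := pow_z a0; have [j ->] := pow_z b0.
rewrite !sq_pow -exprD sq_pow oddD !negbK => -> -> //.
Qed.

Lemma issq_nsq nu a : nu != 0 -> ~~ issq nu -> a != 0 -> issq (nu * a) = ~~ issq a.
Proof.
move=> nu0 nnu a0; apply/idP/idP => [h|h].
  apply/negP=> /issqP [y ey].
  have y0 : y != 0 by apply: contra a0; rewrite ey => /eqP ->; rewrite expr0n.
  by move: h; rewrite ey issq_mulsq // (negbTE nnu).
exact: nsq_mul.
Qed.

Lemma z_nsq : ~~ issq z.
Proof. by rewrite -[z]expr1 sq_pow. Qed.

Lemma hlt : (0 < n./2 < n)%N.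
Proof.
have h := n_gt0; have h2 := halfK n; rewrite (negbTE n_even) subn0 -muln2 in h2.
lia.
Qed.

Lemma half_m1 : z ^+ n./2 = -1.
Proof.
have h2 : (z ^+ n./2) ^+ 2 = 1.
  rewrite -exprM muln2 halfK (negbTE n_even) subn0.
  exact: prim_expr_order.
have h1 : z ^+ n./2 != 1.
  rewrite -(expr0 z) (eq_prim_root_expr pz) mod0n modn_small; last by case/andP: hlt.
  by case/andP: hlt; rewrite lt0n.
move/eqP: h2; rewrite -subr_eq0 subr_sqr_1 mulf_eq0 subr_eq0 (negbTE h1) /=.
by rewrite addr_eq0 => /eqP.
Qed.

Lemma one_neq_m1 : (1 : F) != -1.
Proof.
rewrite -half_m1 eq_sym -(expr0 z) (eq_prim_root_expr pz) mod0n modn_small.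
  by case/andP: hlt; rewrite lt0n.
by case/andP: hlt.
Qed.

Lemma m1_sq : (4 %| n)%N -> issq (-1).
Proof.
move=> h4; rewrite -half_m1 sq_pow.
move: h4; rewrite /n; move: (#|F|.-1) => m; rewrite -!dvdn2.
move=> /dvdnP [c ->]. rewrite (_ : (c * 4)./2 = c * 2)%N; last lia.
by rewrite dvdn_mull.
Qed.

Variable k : nat.
Hypothesis kn : (k %| n)%N.
Hypothesis e_even : ~~ odd (n %/ k).

Lemma k_gt0 : (0 < k)%N.
Proof.
have h := n_gt0; move: kn; case: (k) => // ; rewrite dvd0n => /eqP e.
by move: h; rewrite e.
Qed.

Lemma mu_neq0 (x : F) : x ^+ k = 1 -> x != 0.
Proof.
move=> e; apply/eqP=> x0; move: e; rewrite x0 expr0n gtn_eqF ?k_gt0 //.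
by move/eqP; rewrite eq_sym oner_eq0.
Qed.

Lemma mu_sq (x : F) : x ^+ k = 1 -> issq x.
Proof.
move=> e; have [i ei] := pow_z (mu_neq0 e).
move: e; rewrite ei -exprM => /eqP; rewrite -(prim_order_dvd pz) => h.
rewrite sq_pow; apply: contra e_even => oi.
have : (n %/ k %| i)%N.
  rewrite -(@dvdn_pmul2r k) ?k_gt0 // divnK //.
rewrite /dvdn; move=> /eqP hm.
have := divn_eq i (n %/ k); rewrite hm addn0 => hi.
by move: oi; rewrite hi oddM => /andP [].
Qed.

Lemma card_mu : #|[set x : F | x ^+ k == 1]| = k.
Proof.
have pw := dvdn_prim_root pz kn.
set w := z ^+ (n %/ k) in pw.
have -> : [set x : F | x ^+ k == 1] = [set w ^+ (val i) | i : 'I_k].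
  apply/setP=> x; rewrite inE; apply/eqP/imsetP => [e|[i _ ->]].
    have [i ->] := prim_rootP pw e; by exists i.
  by rewrite -exprM mulnC exprM (prim_expr_order pw) expr1n.
rewrite card_imset ?card_ord // => i j /eqP.
rewrite (eq_prim_root_expr pw) !modn_small ?ltn_ord // => /eqP e.
exact: val_inj.
Qed.

End FF.

Section Proj.
Variable F : finFieldType.

Definition hom (x : option F) : F * F := if x is Some a then (a, 1) else (1, 0).
Definition hd (p r : F * F) := p.1 * r.2 - p.2 * r.1.
Definition hdet x y := hd (hom x) (hom y).
Definition disc x y w := hdet x y * hdet y w * hdet w x.
Definition chi (t : option F * option F * option F) := issq (disc t.1.1 t.1.2 t.2).

Lemma hdet_eq0 x y : (hdet x y == 0) = (x == y).
Proof.
case: x => [a|]; case: y => [b|]; rewrite /hdet /hd /=;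
  rewrite ?(mulr1, mul1r, mulr0, mul0r, subr0, sub0r, oppr_eq0, oner_eq0, eqxx) //.
by rewrite subr_eq0.
Qed.

Lemma lft_hom (a b c d : F) x : a * d - b * c != 0 ->
  exists2 t, t != 0 &
   (a * (hom x).1 + b * (hom x).2 = t * (hom (lft a b c d x)).1 /\
    c * (hom x).1 + d * (hom x).2 = t * (hom (lft a b c d x)).2).
Proof.
move=> D0; case: x => [u|] /=.
  case: eqP => [e|/eqP ne] /=.
    exists (a * u + b); last by rewrite !mulr1 mulr0.
    apply: contra D0 => /eqP e2.
    have -> : b = - (a * u) by apply/eqP; rewrite -addr_eq0 addrC e2.
    have -> : d = - (c * u) by apply/eqP; rewrite -addr_eq0 addrC e.
    apply/eqP; ring.
  exists (c * u + d) => //; rewrite !mulr1; split => //.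
  by rewrite [RHS]mulrC divfK //.
case: eqP => [c0|/eqP c0] /=.
  exists a; last by rewrite c0 !mulr1 !mulr0 ?mul0r ?addr0; split.
  by apply: contra D0; rewrite c0 => /eqP ->; rewrite !mulr0 mul0r subr0.
exists c => //; rewrite !mulr1 !mulr0 !addr0; split => //.
by rewrite [RHS]mulrC divfK //.
Qed.

Lemma hdet_lft (a b c d : F) x y tx ty :
  (a * (hom x).1 + b * (hom x).2 = tx * (hom (lft a b c d x)).1 /\
    c * (hom x).1 + d * (hom x).2 = tx * (hom (lft a b c d x)).2) ->
  (a * (hom y).1 + b * (hom y).2 = ty * (hom (lft a b c d y)).1 /\
    c * (hom y).1 + d * (hom y).2 = ty * (hom (lft a b c d y)).2) ->
  hdet (lft a b c d x) (lft a b c d y) * (tx * ty) = (a * d - b * c) * hdet x y.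
Proof.
rewrite /hdet /hd.
move: (hom x) (hom y) (hom (lft a b c d x)) (hom (lft a b c d y)) => p r p' r'.
move=> [ex1 ex2] [ey1 ey2].
transitivity ((tx * p'.1) * (ty * r'.2) - (tx * p'.2) * (ty * r'.1)); first ring.
rewrite -ex1 -ex2 -ey1 -ey2; ring.
Qed.

Lemma lft_inj (a b c d : F) : a * d - b * c != 0 -> injective (lft a b c d).
Proof.
move=> D0 x y e.
have [tx tx0 hx] := lft_hom x D0; have [ty ty0 hy] := lft_hom y D0.
have := hdet_lft hx hy; rewrite e.
have /eqP -> : hdet (lft a b c d y) (lft a b c d y) == 0 by rewrite hdet_eq0.
move/esym/eqP; rewrite mul0r mulf_eq0 (negbTE D0) /= hdet_eq0.
by move/eqP.
Qed.

Lemma disc_lft (a b c d : F) x y w : a * d - b * c != 0 ->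
  exists2 s, s != 0 &
   disc (lft a b c d x) (lft a b c d y) (lft a b c d w) * s ^+ 2
     = (a * d - b * c) ^+ 3 * disc x y w.
Proof.
move=> D0.
have [tx tx0 hx] := lft_hom x D0; have [ty ty0 hy] := lft_hom y D0.
have [tw tw0 hw] := lft_hom w D0.
exists (tx * ty * tw); first by rewrite !mulf_neq0.
have h1 := hdet_lft hx hy; have h2 := hdet_lft hy hw; have h3 := hdet_lft hw hx.
rewrite /disc.
transitivity ((hdet (lft a b c d x) (lft a b c d y) * (tx * ty)) *
  (hdet (lft a b c d y) (lft a b c d w) * (ty * tw)) *
  (hdet (lft a b c d w) (lft a b c d x) * (tw * tx))); first ring.
rewrite h1 h2 h3; ring.
Qed.

Definition lft3 (m : F * F * F * F) (t : option F * option F * option F) :=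
  (lft m.1.1.1 m.1.1.2 m.1.2 m.2 t.1.1, lft m.1.1.1 m.1.1.2 m.1.2 m.2 t.1.2,
   lft m.1.1.1 m.1.1.2 m.1.2 m.2 t.2).

Lemma chi_lft3 m t : psl_det m.1.1.1 m.1.1.2 m.1.2 m.2 -> chi (lft3 m t) = chi t.
Proof.
case: m => [[[a b] c] d] /= /existsP [y /andP [y0 /eqP eD]].
have D0 : a * d - b * c != 0 by rewrite eD expf_neq0.
have [s s0 h] := disc_lft t.1.1 t.1.2 t.2 D0.
rewrite /chi /lft3 /= -(issq_mulsq _ s0) h eD -exprM mulrC.
by rewrite (_ : (2 * 3 = 3 * 2)%N) // exprM issq_mulsq // expf_neq0.
Qed.

Definition dist3 (t : option F * option F * option F) :=
  [&& t.1.1 != t.1.2, t.1.2 != t.2 & t.1.1 != t.2].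

Lemma disc_neq0 t : dist3 t -> disc t.1.1 t.1.2 t.2 != 0.
Proof.
case/and3P=> h1 h2 h3; rewrite /disc !mulf_neq0 // hdet_eq0 //.
by rewrite eq_sym.
Qed.

Lemma dist3_lft3 m t : m.1.1.1 * m.2 - m.1.1.2 * m.1.2 != 0 ->
  dist3 (lft3 m t) = dist3 t.
Proof.
move=> D0; have hi := lft_inj D0.
by rewrite /dist3 /lft3 /= !(inj_eq hi).
Qed.

End Proj.

Lemma card_sep (T : finType) (A : {set T}) (P : pred T) :
  #|[set x in A | P x]| = (\sum_(x in A) (P x : nat))%N.
Proof.
rewrite -sum1_card big_mkcond [RHS]big_mkcond /=.
apply: eq_bigr => i _; rewrite inE; by case: (i \in A); case: (P i).
Qed.

Lemma card3 (T : finType) (a b c : T) : a != b -> b != c -> a != c ->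
  #|[set a; b; c]| = 3%N.
Proof.
move=> ab bc ac; rewrite -setUA cardsU1 cards2 !inE (negbTE ab) (negbTE ac).
by rewrite bc.
Qed.

Section Count.
Variable F : finFieldType.

Definition Mc c := [set t : option F * option F * option F | dist3 t && (chi t == c)].
Definition inC (t : option F * option F * option F) (C : {set option F}) :=
  [&& t.1.1 \in C, t.1.2 \in C & t.2 \in C].
Definition oc C c := #|[set t in Mc c | inC t C]|.

Lemma lft_id x : lft 1 0 0 (1 : F) x = x.
Proof.
case: x => [u|] /=; last by rewrite eqxx.
by rewrite mul0r add0r oner_eq0 mul1r addr0 divr1.
Qed.

Lemma B_in_orbit (B : {set option F}) : B \in psl_orbit B.
Proof.
apply/imsetP; exists (1, 0, 0, 1) => /=.
  rewrite inE; apply/existsP; exists 1; rewrite oner_neq0 /=.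
  by rewrite mulr1 mulr0 subr0 expr1n.
by rewrite (eq_imset _ lft_id) imset_id.
Qed.

Lemma orbit_oc (B C : {set option F}) c : C \in psl_orbit B -> oc C c = oc B c.
Proof.
case/imsetP=> m; rewrite inE => hm ->.
have D0 : m.1.1.1 * m.2 - m.1.1.2 * m.1.2 != 0.
  by case/existsP: hm => y /andP [y0 /eqP ->]; rewrite expf_neq0.
have hi := lft_inj D0.
have hi3 : injective (lft3 m).
  move=> [[x1 x2] x3] [[y1 y2] y3]; rewrite /lft3 /= => [[/hi -> /hi -> /hi ->]].
  by [].
rewrite /oc; transitivity #|lft3 m @: [set t in Mc c | inC t B]|; last exact: card_imset.
apply: eq_card => t; apply/idP/imsetP.
  rewrite !inE => /andP [/andP [dt ct] /and3P [h1 h2 h3]].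
  case/imsetP: h1 => x1 x1B e1; case/imsetP: h2 => x2 x2B e2.
  case/imsetP: h3 => x3 x3B e3.
  have et : t = lft3 m (x1, x2, x3) by case: t e1 e2 e3 {dt ct} => [[? ?] ?] /= -> -> ->.
  exists (x1, x2, x3) => //.
  rewrite et dist3_lft3 // chi_lft3 // in dt ct.
  by rewrite !inE dt ct /inC /= x1B x2B x3B.
move=> [s]; rewrite !inE => /andP [/andP [ds cs] /and3P [h1 h2 h3]] ->.
rewrite dist3_lft3 // chi_lft3 // ds cs /inC /=.
by rewrite !imset_f.
Qed.

Lemma sum_exchange (Orb : {set {set option F}}) c :
  (\sum_(t in Mc c) #|[set C in Orb | inC t C]| = \sum_(C in Orb) oc C c)%N.
Proof.
rewrite /oc; under eq_bigr do rewrite card_sep.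
under [RHS]eq_bigr do rewrite card_sep.
exact: exchange_big.
Qed.

Lemma sum_lhs (Orb : {set {set option F}}) (lam : nat) c :
  (forall T : {set option F}, #|T| = 3%N -> #|[set C in Orb | T \subset C]| = lam) ->
  (\sum_(t in Mc c) #|[set C in Orb | inC t C]| = #|Mc c| * lam)%N.
Proof.
move=> H; rewrite -sum_nat_const; apply: eq_bigr => t; rewrite inE => /andP [dt _].
case/and3P: dt => d1 d2 d3.
rewrite -(H [set t.1.1; t.1.2; t.2]); last exact: card3.
apply: eq_card => C; rewrite !inE /inC !subUset !sub1set.
by rewrite !andbA.
Qed.

Variable z : F.
Hypothesis pz : (#|F|.-1).-primitive_root z.
Hypothesis n_even : ~~ odd (#|F|.-1).

Local Notation sig := (lft3 (z, 0, 0, 1)).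

Lemma sig_chi t : dist3 t -> chi (sig t) = ~~ chi t.
Proof.
move=> dt.
have D0 : z * 1 - 0 * 0 != 0 by rewrite mulr1 mulr0 subr0 (z_neq0 pz).
have [s s0 h] := disc_lft t.1.1 t.1.2 t.2 D0.
rewrite /chi /lft3 /= -(issq_mulsq _ s0) h mulr1 mulr0 subr0.
have dn := disc_neq0 dt.
rewrite (_ : z ^+ 3 * _ = z * (disc t.1.1 t.1.2 t.2 * z ^+ 2)); last by ring.
rewrite (issq_nsq pz n_even) ?(z_neq0 pz) ?(z_nsq pz n_even) //.
  by rewrite issq_mulsq // (z_neq0 pz).
by rewrite mulf_neq0 // expf_neq0 // (z_neq0 pz).
Qed.

Lemma sig_inj : injective sig.
Proof.
have D0 : z * 1 - 0 * 0 != 0 by rewrite mulr1 mulr0 subr0 (z_neq0 pz).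
have hi := lft_inj D0.
move=> [[x1 x2] x3] [[y1 y2] y3]; rewrite /lft3 /= => [[/hi -> /hi -> /hi ->]].
by [].
Qed.

Lemma sig_Mc c : sig @: Mc c \subset Mc (~~ c).
Proof.
pose m0 : F * F * F * F := (z, 0, 0, 1).
have D0 : m0.1.1.1 * m0.2 - m0.1.1.2 * m0.1.2 != 0.
  by rewrite /= mulr1 mulr0 subr0 (z_neq0 pz).
apply/subsetP=> t /imsetP [u]; rewrite !inE => /andP [du /eqP cu] ->.
by rewrite (dist3_lft3 _ D0) du sig_chi // cu eqxx.
Qed.

Lemma Mc_eq : #|Mc true| = #|Mc false|.
Proof.
apply/eqP; rewrite eqn_leq.
have := subset_leq_card (sig_Mc true); rewrite card_imset; last exact: sig_inj.
move=> -> /=.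
have := subset_leq_card (sig_Mc false); by rewrite card_imset //; exact: sig_inj.
Qed.

Lemma balance (B : {set option F}) : is_3design (psl_orbit B) -> oc B true = oc B false.
Proof.
case=> lam [_ H].
have e c : (#|Mc c| * lam = #|psl_orbit B| * oc B c)%N.
  rewrite -(sum_lhs c H) sum_exchange -sum_nat_const.
  apply: eq_bigr => C hC; exact: orbit_oc.
have pos : (0 < #|psl_orbit B|)%N by apply/card_gt0P; exists B; exact: B_in_orbit.
apply/eqP; rewrite -(eqn_pmul2l pos) -e -e Mc_eq //.
Qed.

End Count.

Lemma card_sepP (T : finType) (P Q : pred T) :
  #|[set x | P x && Q x]| = (\sum_(x | P x) (Q x : nat))%N.
Proof.
rewrite -sum1_card big_mkcond [RHS]big_mkcond /=.
apply: eq_bigr => i _; rewrite inE; by case: (P i); case: (Q i).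
Qed.

Section Mu.
Variable F : finFieldType.
Variable z : F.
Hypothesis pz : (#|F|.-1).-primitive_root z.
Hypothesis n_even : ~~ odd (#|F|.-1).
Variable k : nat.
Hypothesis kn : (k %| #|F|.-1)%N.
Hypothesis e_even : ~~ odd (#|F|.-1 %/ k).
Hypothesis m1 : issq (-1 : F).

Definition mu := [set x : F | x ^+ k == 1].
Definition dsc (a b c : F) := (a - b) * (b - c) * (c - a).

Lemma disc_Some a b c : disc (Some a) (Some b) (Some c) = dsc a b c.
Proof. rewrite /disc /hdet /hd /dsc /=; ring. Qed.

Lemma mu_nz x : x \in mu -> x != 0.
Proof. rewrite inE => /eqP; exact: (mu_neq0 pz kn). Qed.

Lemma mu_M x y : x \in mu -> y \in mu -> x * y \in mu.
Proof. by rewrite !inE exprMn => /eqP -> /eqP ->; rewrite mulr1. Qed.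

Lemma mu_V x : x \in mu -> x^-1 \in mu.
Proof. by rewrite !inE exprVn => /eqP ->; rewrite invr1. Qed.

Lemma mu_1 : 1 \in mu.
Proof. by rewrite inE expr1n. Qed.

Lemma mu_sqx x : x \in mu -> exists2 y, y != 0 & x = y ^+ 2.
Proof.
move=> xm; have /eqP xk : x ^+ k == 1 by move: xm; rewrite inE.
have /issqP [y ey] := mu_sq pz n_even kn e_even xk.
exists y => //.
by apply: contra (mu_nz xm); rewrite ey => /eqP ->; rewrite expr0n.
Qed.

Lemma issq_cube (s d : F) : s \in mu -> issq (s ^+ 3 * d) = issq d.
Proof.
case/mu_sqx=> y y0 ->; rewrite -exprM mulnC exprM mulrC issq_mulsq //.
by rewrite expf_neq0.
Qed.

Lemma issqN (d : F) : issq (- d) = issq d.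
Proof.
case/issqP: m1 => w ew.
have w0 : w != 0.
  apply/eqP=> w0; move: ew; rewrite w0 expr0n /= => /eqP; by rewrite oppr_eq0 oner_eq0.
by rewrite -mulrN1 ew issq_mulsq.
Qed.

Lemma dsc_scale s a b c : dsc (s * a) (s * b) (s * c) = s ^+ 3 * dsc a b c.
Proof. rewrite /dsc; ring. Qed.

Definition S := [set p : F * F | [&& p.1 \in mu, p.2 \in mu, p.1 != 1, p.2 != 1 & p.1 != p.2]].
Definition Sc c := [set p in S | issq (dsc 1 p.1 p.2) == c].

Lemma Bs_eq : mu_sub F k = [set Some x | x in mu].
Proof. by []. Qed.

Lemma oc_mu c : oc (mu_sub F k) c = (k * #|Sc c|)%N.
Proof.
pose h (w : F * (F * F)) := (Some w.1, Some (w.1 * w.2.1), Some (w.1 * w.2.2)).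
have hinj : {in setX mu (Sc c) &, injective h}.
  move=> [x [u v]] [x' [u' v']]; rewrite !inE /= => /andP [xm _] _ [ex eu ev].
  move: eu ev; rewrite -ex => /(mulfI (mu_neq0 pz kn (eqP xm))) -> /(mulfI (mu_neq0 pz kn (eqP xm))) -> //.
rewrite /oc (_ : (k * _)%N = #|setX mu (Sc c)|); last by rewrite cardsX (card_mu pz kn).
rewrite -(card_in_imset hinj).
apply: eq_card => t; apply/idP/imsetP.
  rewrite !inE => /andP [/andP [dt ct] /and3P [h1 h2 h3]].
  case/imsetP: h1 => x1 x1m e1; case/imsetP: h2 => x2 x2m e2.
  case/imsetP: h3 => x3 x3m e3.
  have x10 := mu_nz x1m.
  exists (x1, (x2 / x1, x3 / x1)).
    have hd2 : x2 / x1 != 1.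
      apply: contraTneq dt => e; rewrite /dist3 e1 e2.
      by rewrite -(divfK x10 x2) e mul1r eqxx.
    have hd3 : x3 / x1 != 1.
      apply: contraTneq dt => e; rewrite /dist3 e1 e3.
      by rewrite -(divfK x10 x3) e mul1r eqxx !andbF.
    have hd23 : x2 / x1 != x3 / x1.
      apply: contraTneq dt => e; rewrite /dist3 e2 e3.
      by rewrite -(divfK x10 x3) -e divfK // eqxx andbF.
    have m2 : x2 / x1 \in mu := mu_M x2m (mu_V x1m).
    have m3 : x3 / x1 \in mu := mu_M x3m (mu_V x1m).
    move: (x1m) m2 m3; rewrite !inE /= => -> -> ->; rewrite hd2 hd3 hd23 /=.
    rewrite /chi e1 e2 e3 /= disc_Some in ct.
    rewrite -(issq_cube _ x1m) -dsc_scale.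
    by rewrite mulr1 !(mulrC x1 (_ / x1)) !divfK.
  by rewrite /h /= !(mulrC x1) !divfK //; case: t e1 e2 e3 {dt ct} => [[? ?] ?] /= -> -> ->.
move=> [[x [u v]]]; rewrite !inE /= => /andP [xm /andP [/and5P [um vm u1 v1 uv] cc]] ->.
have xm' : x \in mu by rewrite inE.
have um' : u \in mu by rewrite inE.
have vm' : v \in mu by rewrite inE.
have x0 := mu_nz xm'.
rewrite /dist3 /h /= /inC /=.
rewrite !imset_f ?mu_M // !andbT.
rewrite !(inj_eq (@Some_inj _)).
rewrite (inj_eq (mulfI x0)) uv.
rewrite -{1}[x]mulr1 (inj_eq (mulfI x0)) eq_sym u1.
rewrite -{1}[x]mulr1 (inj_eq (mulfI x0)) eq_sym v1 /=.
by rewrite /chi disc_Some /= -[X in dsc X]mulr1 dsc_scale issq_cube.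
Qed.


Lemma card_S : #|S| = ((k - 1) * (k - 2))%N.
Proof.
pose A := mu :\ 1.
have cA : #|A| = (k - 1)%N.
  have := cardsD1 1 mu; rewrite mu_1 (card_mu pz kn) /= => h; rewrite /A.
  by move: h; move: (#|mu :\ 1|) => a ->; rewrite add1n subn1.
have -> : #|S| = #|[set p : F * F | ((p.1 \in A) && (p.2 \in A)) && (p.1 != p.2)]|.
  apply: eq_card => p; rewrite !inE.
  by case: (p.1 == 1); case: (p.2 == 1); case: (p.1 ^+ k == 1); case: (p.2 ^+ k == 1).
rewrite card_sepP.
transitivity (\sum_(u in A) \sum_(v in A) (u != v : nat))%N.
  by rewrite pair_big.
transitivity (\sum_(u in A) (k - 2))%N; last by rewrite sum_nat_const cA.
apply: eq_bigr => u uA.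
rewrite -card_sep.
have -> : [set v in A | u != v] = A :\ u.
  by apply/setP=> v; rewrite in_setD1 in_set eq_sym andbC.
have := cardsD1 u A; rewrite uA cA; lia.
Qed.

Lemma card_Sc : (#|Sc true| + #|Sc false|)%N = #|S|.
Proof.
rewrite /Sc !card_sep -big_split /= -sum1_card.
apply: eq_bigr => p _; by case: (issq _).
Qed.

Lemma ScP c p : (p \in Sc c) =
  [&& p.1 \in mu, p.2 \in mu, p.1 != 1, p.2 != 1, p.1 != p.2 & issq (dsc 1 p.1 p.2) == c].
Proof. by rewrite /Sc /S !inE -!andbA. Qed.

Definition sw (p : F * F) := (p.2, p.1).
Definition rot (p : F * F) := (p.2 / p.1, p.1^-1).
Definition iv (p : F * F) := (p.1^-1, p.2^-1).
Definition ng (p : F * F) := (- p.1, - p.2).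

Lemma sw_Sc c p : p \in Sc c -> sw p \in Sc c.
Proof.
case: p => u v; rewrite !ScP /= => /and5P [um vm u1 v1 /andP [uv cc]].
rewrite um vm u1 v1 eq_sym uv /=.
have -> : dsc 1 v u = - dsc 1 u v by rewrite /dsc; ring.
by rewrite issqN.
Qed.

Lemma rot_Sc c p : p \in Sc c -> rot p \in Sc c.
Proof.
case: p => u v; rewrite !ScP /= => /and5P [um vm u1 v1 /andP [uv cc]].
have u0 := mu_nz um.
rewrite mu_M ?mu_V // invr_eq1 u1 /=.
have -> /= : v / u != 1.
  by apply: contra uv => /eqP e; rewrite -(divfK u0 v) e mul1r.
have -> /= : v / u != u^-1.
  by apply: contra v1 => /eqP e; rewrite -(divfK u0 v) e mulVf.
have -> : dsc 1 (v / u) u^-1 = u^-1 ^+ 3 * dsc 1 u v.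
  by rewrite /dsc; field.
by rewrite issq_cube ?mu_V.
Qed.

Lemma rot3 p : p \in S -> rot (rot (rot p)) = p.
Proof.
case: p => u v; rewrite inE /= => /and5P [um vm _ _ _].
have u0 := mu_nz um; have v0 := mu_nz vm.
rewrite /rot /=; congr pair; field.
all: by rewrite u0 v0 oner_neq0.
Qed.

Lemma Sc_S c p : p \in Sc c -> p \in S.
Proof. by rewrite inE => /andP []. Qed.

Lemma P_even c : (2 %| #|Sc c|)%N.
Proof.
apply: (@inv_div _ sw) => p pS; split.
- exact: sw_Sc.
- by case: p {pS}.
- case: p pS => u v; rewrite ScP /= => /and5P [_ _ _ _ /andP [uv _]].
  by rewrite /sw /= xpair_eqE eq_sym (negbTE uv).
Qed.

Lemma fix_alg u v : u \in mu -> u != 1 -> v / u = u -> u^-1 = v ->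
  u ^+ 2 + u + 1 = 0 /\ v = u ^+ 2.
Proof.
move=> um u1 e1 e2; have u0 := mu_nz um.
have ev : v = u ^+ 2 by rewrite -(divfK u0 v) e1 expr2.
split => //.
have h3 : u ^+ 3 = 1 by rewrite exprS -ev -e2 mulfV.
have : (u - 1) * (u ^+ 2 + u + 1) = 0.
  by transitivity (u ^+ 3 - 1); [ring | rewrite h3 subrr].
by move/eqP; rewrite mulf_eq0 subr_eq0 (negbTE u1) /= => /eqP.
Qed.

Lemma P_mod3 c : (3 %| #|Sc c|)%N || (3 %| #|Sc c| + 1)%N.
Proof.
pose Fx := [set p : F * F | rot p == p].
have FxP q : (q \in Fx) = (rot q == q) by rewrite inE.
have e := cardsID Fx (Sc c).
have h3 : (3 %| #|Sc c :\: Fx|)%N.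
  apply: (@ord3_div _ rot) => p; rewrite in_setD FxP => /andP [nf pS].
  have pS' : p \in S := Sc_S pS.
  split.
  - rewrite in_setD rot_Sc // andbT FxP; apply: contra nf => /eqP h.
    have e3 := rot3 pS'; rewrite h h in e3; by rewrite e3.
  - exact: rot3.
  - by [].
have h2 : (2 %| #|Sc c :&: Fx|)%N.
  apply: (@inv_div _ sw) => p; rewrite in_setI FxP => /andP [pS fx].
  split.
  - rewrite in_setI sw_Sc ?FxP //=.
    case: p pS fx => u v; rewrite ScP /= => /and5P [um vm u1 v1 _].
    rewrite /rot /sw /= xpair_eqE => /andP [/eqP e1 /eqP e2].
    have [_ ev] := fix_alg um u1 e1 e2.
    have iv : v^-1 = u by rewrite -e2 invrK.
    by rewrite xpair_eqE iv eqxx andbT ev expr2.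
  - by case: p {pS fx}.
  - case: p pS {fx} => u v; rewrite ScP /= => /and5P [_ _ _ _ /andP [uv _]].
    by rewrite /sw /= xpair_eqE eq_sym (negbTE uv).
have hle : (#|Sc c :&: Fx| <= 2)%N.
  have [->|[p0 p0F]] := set_0Vmem (Sc c :&: Fx); first by rewrite cards0.
  apply: (@leq_trans #|[set p0; sw p0]|); last by rewrite cards2; case: (_ != _).
  apply: subset_leq_card; apply/subsetP => p pF.
  move: p0F pF; rewrite !in_setI !FxP !ScP.
  case: p0 => u0 v0; case: p => u v.
  rewrite /= /rot /= !xpair_eqE.
  move=> /andP [/and5P [u0m _ u01 _ _] /andP [/eqP a1 /eqP a2]].
  move=> /andP [/and5P [um _ u1 _ _] /andP [/eqP b1 /eqP b2]].
  have [q0 ev0] := fix_alg u0m u01 a1 a2.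
  have [q ev] := fix_alg um u1 b1 b2.
  have : (u - u0) * (u + u0 + 1) = 0.
    by rewrite -[RHS](subrr 0) -{1}q -q0; ring.
  rewrite !inE.
  move/eqP; rewrite mulf_eq0 subr_eq0 => /orP [/eqP eu| /eqP eu].
    by rewrite /sw /= -b2 -a2 eu !eqxx.
  have eu' : u = v0.
    rewrite ev0; apply/eqP; rewrite -subr_eq0; apply/eqP.
    transitivity ((u + u0 + 1) - (u0 ^+ 2 + u0 + 1)); first ring.
    by rewrite eu q0 subrr.
  by rewrite /sw /= -b2 eu' -a2 invrK !eqxx orbT.
move: e h3 h2 hle; rewrite setIC.
move: #|Sc c :&: Fx| #|Sc c :\: Fx| => a b <- /dvdnP [x ->] /dvdnP [y ->].
case: y => [|[|y]] hle /=.
- by rewrite mul0n add0n dvdn_mull.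
- apply/orP; right; apply/dvdnP; exists x.+1; lia.
- lia.
Qed.


Lemma iv_Sc c p : p \in Sc c -> iv p \in Sc c.
Proof.
case: p => u v; rewrite !ScP /= => /and5P [um vm u1 v1 /andP [uv cc]].
have u0 := mu_nz um; have v0 := mu_nz vm.
rewrite !mu_V // !invr_eq1 u1 v1 (inj_eq (@invr_inj F)) uv /=.
have -> : dsc 1 u^-1 v^-1 = - (dsc 1 u v * ((u * v)^-1) ^+ 2).
  by rewrite /dsc; field; rewrite u0 v0.
by rewrite issqN issq_mulsq // invr_neq0 // mulf_neq0.
Qed.

Lemma two_neq0 : (1 + 1 : F) != 0.
Proof. by rewrite addr_eq0 (one_neq_m1 pz n_even). Qed.

Lemma mu_N (u : F) : ~~ odd k -> u \in mu -> - u \in mu.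
Proof.
by move=> hk; rewrite !inE exprNn -signr_odd (negbTE hk) expr0 mul1r.
Qed.

Lemma inv_self (u : F) : u != 0 -> u^-1 = u -> u != 1 -> u = -1.
Proof.
move=> u0 e u1.
have : (u - 1) * (u + 1) = 0.
  transitivity (u * u - 1); first ring.
  by rewrite -{1}e mulVf // subrr.
move/eqP; rewrite mulf_eq0 subr_eq0 (negbTE u1) /= addr_eq0 => /eqP //.
Qed.

Lemma ng_Sc c p : ~~ odd k -> p \in Sc c -> p.2 = p.1^-1 -> ng p \in Sc c.
Proof.
move=> hk; case: p => u v; rewrite !ScP /= => /and5P [um vm u1 v1 /andP [uv cc]] ev.
have u0 := mu_nz um.
have um1 : u != -1.
  apply: contra uv => /eqP eu; by rewrite ev eu invrN1.
have vm1 : v != -1.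
  apply: contra uv => /eqP eu; apply/eqP.
  by rewrite eu; move: ev; rewrite eu => e; rewrite -[u]invrK -e invrN1.
rewrite !mu_N // (inj_eq (@oppr_inj F)) uv /=.
rewrite (eqr_oppLR u 1) (eqr_oppLR v 1) um1 vm1 /=.
have h1u : 1 - u != 0 by rewrite subr_eq0 eq_sym.
have h1u' : 1 + u != 0 by rewrite addrC addr_eq0.
have -> : dsc 1 (- u) (- v) = dsc 1 u v * ((1 + u) / (1 - u)) ^+ 2.
  by rewrite ev /dsc; field; rewrite u0 h1u.
by rewrite issq_mulsq // mulf_neq0 // invr_neq0.
Qed.

Lemma P_mod4 c : ~~ odd k -> (forall u, u \in mu -> u ^+ 2 != -1) ->
  (4 %| #|Sc c|)%N.
Proof.
move=> hk hsq.
pose Iv := [set p : F * F | p.2 == p.1^-1].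
have IvP q : (q \in Iv) = (q.2 == q.1^-1) by rewrite inE.
have e := cardsID Iv (Sc c).
have h1 : (4 %| #|Sc c :\: Iv|)%N.
  apply: (@klein_div _ sw iv) => p; rewrite in_setD IvP => /andP [nI pS].
  have := pS; case: p {pS} nI => u v nI pS; rewrite ScP /= in pS nI.
  case/and5P: pS => um vm u1 v1 /andP [uv cc].
  have u0 := mu_nz um; have v0 := mu_nz vm.
  have pS : (u, v) \in Sc c by rewrite ScP um vm u1 v1 uv cc.
  split.
  - rewrite in_setD sw_Sc // IvP /= andbT; apply: contra nI => /eqP ->.
    by rewrite invrK.
  - rewrite in_setD iv_Sc // IvP /= andbT (inj_eq (@invr_inj F)) //.
  - by [].
  - by rewrite /iv /= !invrK.
  split.
  - by [].
  - by rewrite /sw /= xpair_eqE eq_sym (negbTE uv).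
  - rewrite /iv /= xpair_eqE; apply/negP => /andP [/eqP a /eqP b].
    have := inv_self u0 a u1; have := inv_self v0 b v1.
    by move=> e1 e2; move: uv; rewrite e1 e2 eqxx.
  - rewrite /iv /sw /= xpair_eqE; apply/negP => /andP [/eqP a _].
    by move: nI; rewrite -a invrK eqxx.
have h2 : (4 %| #|Sc c :&: Iv|)%N.
  apply: (@klein_div _ sw ng) => p; rewrite in_setI IvP => /andP [pS pI].
  have := pS; case: p {pS} pI => u v pI pS; rewrite ScP /= in pS pI.
  case/and5P: pS => um vm u1 v1 /andP [uv cc].
  have u0 := mu_nz um; have v0 := mu_nz vm.
  have pS : (u, v) \in Sc c by rewrite ScP um vm u1 v1 uv cc.
  move/eqP: pI => ev.
  split.
  - rewrite in_setI sw_Sc // IvP /= ev invrK eqxx //.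
  - rewrite in_setI ng_Sc // IvP /= ev invrN eqxx //.
  - by [].
  - by rewrite /ng /= !opprK.
  split.
  - by [].
  - by rewrite /sw /= xpair_eqE eq_sym (negbTE uv).
  - rewrite /ng /= xpair_eqE; apply/negP => /andP [/eqP a _].
    have : u * (1 + 1) = 0 by rewrite mulrDr mulr1 -{1}a addNr.
    by move/eqP; rewrite mulf_eq0 (negbTE u0) (negbTE two_neq0).
  - rewrite /ng /sw /= xpair_eqE; apply/negP => /andP [/eqP a _].
    have : u ^+ 2 = -1 by rewrite expr2 -{2}a ev mulrN mulfV.
    by move/eqP; rewrite (negbTE (hsq u um)).
move: e h1 h2; rewrite setIC => <- h1 h2.
by rewrite dvdn_addr.
Qed.


Lemma main_mu : gives_3design F k -> (k %% 24 \in [:: 1; 2; 5; 10; 13; 17])%N.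
Proof.
move=> hd.
have bal := balance pz n_even hd.
rewrite !oc_mu in bal.
have k0 : (0 < k)%N := k_gt0 pz kn.
have eP : #|Sc true| = #|Sc false| by apply/eqP; rewrite -(eqn_pmul2l k0) bal.
have e2 : (2 * #|Sc true| = (k - 1) * (k - 2))%N.
  by rewrite -card_S -card_Sc -eP; lia.
have h3 := @arith3 k _ k0 e2 (P_mod3 true).
apply: arith_final => //.
case: (boolP (odd k)) => ko.
  by left; apply: (@arith_odd k _ ko e2 (P_even true)).
right.
have h4 : (2 ^ 2 %| k - 2)%N by apply: (@arith_even k _ 1 k0 ko e2); rewrite expn1 P_even.
have hsq : forall u, u \in mu -> u ^+ 2 != -1.
  move=> u; rewrite inE => /eqP uk; apply/eqP => u2.
  move: h4 => /dvdnP [c hc].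
  have ek : k = (2 * (2 * c + 1))%N by lia.
  move: uk; rewrite ek exprM u2 -signr_odd.
  have -> : odd (2 * c + 1) by rewrite oddD oddM.
  rewrite expr1 => /eqP; rewrite eq_sym.
  by rewrite (negbTE (one_neq_m1 pz n_even)).
have h8 : (2 ^ 3 %| k - 2)%N.
  by apply: (@arith_even k _ 2 k0 ko e2); apply: P_mod4.
move: h8 => /dvdnP [c hc]; lia.
Qed.

End Mu.

Local Close Scope ring_scope.

Theorem theorem3p1 (F : finFieldType) (q k : nat) :
  #|F| = q -> q %% 4 = 1 -> k %| q.-1 -> ~~ odd (q.-1 %/ k) ->
  gives_3design F k ->
  k %% 24 \in [:: 1; 2; 5; 10; 13; 17].
Proof.
move=> hq hq4 kn ke hd; subst q.
have [z pz] := prim_exists F.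
have n4 : (4 %| #|F|.-1)%N.
  have h := divn_eq #|F| 4; rewrite hq4 in h.
  by rewrite {1}h addn1 /= dvdn_mull.
have n_even : ~~ odd #|F|.-1 by move: n4 => /dvdnP [c ->]; rewrite oddM andbF.
have m1 := m1_sq pz n_even n4.
exact: (main_mu pz n_even kn ke m1 hd).
Qed.
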